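(* Let $R$ be a localizable archimedean partially ordered commutative ring and let $q\in\mathrm{Loc}(R)$. Then $\mathrm{O}_{q<\infty}$ is dense in $\mathcal{K}(R)$.
   Context: Rings are commutative with unit; ring morphisms are unital. A partially ordered commutative ring is a commutative ring $R$ with partial order $\le$, $r\le s\Rightarrow r+t\le s+t$, positive cone $R^+$ closed under multiplication and containing all squares. $\mathbb{N}=\{1,2,\dots\}$, $\mathbb{N}_0=\mathbb{N}\cup\{0\}$. Archimedean: $kg+h\in R^+$ for all $k\in\mathbb{N}$ implies $g\in R^+$. $\mathrm{Loc}(R)$ is the set of $s\in1+R^+$ such that $rs\in R^+$ implies $r\in R^+$ for all $r$; localizable: every $r$ satisfies $-s\le r\le s$ for some $s\in\mathrm{Loc}(R)$. $R_{\mathrm{loc}}$: fractions $r/s$ ($r\in R$, $s\in\mathrm{Loc}(R)$), $r/s=r'/s'$ iff $rs'=r's$, ordered by $p/q\le r/s$ iff $ps\le rq$. $R^{\mathrm{bd}}_{\mathrm{loc}}=\{a:\exists n\in\mathbb{N}_0,\ -n\le a\le n\}$. $\mathcal{K}(R)$: ring morphisms $\varphi\colon R^{\mathrm{bd}}_{\mathrm{loc}}\to\mathbb{R}$ with $\varphi(a)\ge0$ for $a\ge0$, with the topology generated by the sets $\{\varphi:\varphi(a)\in V\}$, $a\in R^{\mathrm{bd}}_{\mathrm{loc}}$, $V\subseteq\mathbb{R}$ open. $\mathrm{O}_{q<\infty}=\{\varphi\in\mathcal{K}(R):\varphi(1/q)>0\}$. *)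

(* Defs.v *)
From HB Require Import structures.
From mathcomp Require Import all_boot all_order all_algebra.
From mathcomp Require Import all_classical all_reals topology normedtype.
Set Implicit Arguments. Unset Strict Implicit. Unset Printing Implicit Defensive.
Import Order.TTheory GRing.Theory Num.Theory.
Import numFieldNormedType.Exports.
Local Open Scope ring_scope.
Local Open Scope classical_set_scope.

Section POring.
Variable R : comPzRingType.
Variable le : R -> R -> Prop.

Record po_comring : Prop := {
  po_refl : forall x, le x x;
  po_antisym : forall x y, le x y -> le y x -> x = y;
  po_trans : forall x y z, le x y -> le y z -> le x z;
  po_add : forall r s t, le r s -> le (r + t) (s + t);
  po_mul : forall r s, le 0 r -> le 0 s -> le 0 (r * s);
  po_sq : forall r, le 0 (r * r) }.

Definition archimedean : Prop :=
  forall g h : R, (forall k : nat, (0 < k)%N -> le 0 (g *+ k + h)) -> le 0 g.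

Definition Loc (s : R) : Prop :=
  le 0 (s - 1) /\ forall r : R, le 0 (r * s) -> le 0 r.

Definition localizable : Prop :=
  forall r : R, exists s, Loc s /\ le (- s) r /\ le r s.

(* fractions r/s of R_loc, represented by pairs (r, s) with s in Loc(R) *)
Definition frac_eq (a b : R * R) : Prop := a.1 * b.2 = b.1 * a.2.
Definition frac_le (a b : R * R) : Prop := le (a.1 * b.2) (b.1 * a.2).
Definition frac_add (a b : R * R) : R * R := (a.1 * b.2 + b.1 * a.2, a.2 * b.2).
Definition frac_mul (a b : R * R) : R * R := (a.1 * b.1, a.2 * b.2).

Definition is_bd (a : R * R) : Prop :=
  Loc a.2 /\ exists n : nat, frac_le (- n%:R, 1) a /\ frac_le a (n%:R, 1).

Definition bdfrac := {a : R * R | is_bd a}.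

(* phi : R^bd_loc -> RR is a positive unital ring morphism (phi is given on
   representatives and required to be compatible with equality of fractions) *)
Definition character (RR : realType) (phi : bdfrac -> RR) : Prop :=
  [/\ (forall a b : bdfrac, frac_eq (sval a) (sval b) -> phi a = phi b),
      (forall a b c : bdfrac, frac_eq (sval c) (frac_add (sval a) (sval b)) ->
          phi c = phi a + phi b),
      (forall a b c : bdfrac, frac_eq (sval c) (frac_mul (sval a) (sval b)) ->
          phi c = phi a * phi b),
      (forall c : bdfrac, frac_eq (sval c) (1, 1) -> phi c = 1) &
      (forall a : bdfrac, frac_le (0, 1) (sval a) -> 0 <= phi a)].

Definition K (RR : realType) : set (bdfrac -> RR) := [set phi | character phi].

Definition O_q_lt_infty (RR : realType) (q : R) : set (bdfrac -> RR) :=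
  [set phi | K phi /\ exists a : bdfrac, frac_eq (sval a) (1, q) /\ 0 < phi a].

(* S is dense in K(R) for the topology generated by the subbasic sets
   {phi | phi(a) in V}: every nonempty basic open set (finite intersection of
   subbasic sets) meets S. *)
Definition dense_in_K (RR : realType) (S : set (bdfrac -> RR)) : Prop :=
  forall phi : bdfrac -> RR, K phi ->
  forall (n : nat) (a : 'I_n -> bdfrac) (V : 'I_n -> set RR),
    (forall i, open (V i)) -> (forall i, V i (phi (a i))) ->
    exists psi, S psi /\ forall i, V i (psi (a i)).

End POring.

(* Main.v *)
Require Import Defs.
From HB Require Import structures.
From mathcomp Require Import all_boot all_order all_algebra.
From mathcomp Require Import all_classical all_reals topology normedtype.
From mathcomp Require Import ring lra zify.
Set Implicit Arguments. Unset Strict Implicit. Unset Printing Implicit Defensive.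
Import Order.TTheory GRing.Theory Num.Theory.
Import numFieldNormedType.Exports.
Local Open Scope ring_scope.
Local Open Scope classical_set_scope.
Local Open Scope quotient_scope.

Section Dense.
Variable RR : realType.

Lemma rat_between (x y : RR) : x < y ->
  exists (m : int) (n : nat), (0 < n)%N /\ x < m%:~R / n%:R < y.
Proof.
move=> xy.
have d0 : 0 < y - x by rewrite subr_gt0.
set n := Num.bound ((y - x)^-1).
have hn : (y - x)^-1 < n%:R by apply: archi_boundP; rewrite ltW // invr_gt0.
have n0 : (0 < n)%N.
  by rewrite -(ltr_nat RR); apply: lt_trans hn; rewrite invr_gt0.
have n0' : (0 : RR) < n%:R by rewrite ltr0n.
exists (Num.floor (x * n%:R) + 1), n; split => //.
have h1 := floorD1_gt (x * n%:R).
have h2 := floor_le (x * n%:R).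
apply/andP; split.
  by rewrite ltr_pdivlMr.
rewrite ltr_pdivrMr // intrD.
have : 1 < (y - x) * n%:R.
  by rewrite -ltr_pdivrMl // mulr1.
lra.
Qed.
End Dense.

Lemma bern (c N : nat) : (c ^ N * (c + N) <= (c + 1) ^ N * c)%N.
Proof.
elim: N => [|N IH]; first by rewrite !expn0 !mul1n addn0.
rewrite !expnS.
move: IH; set a := (c ^ N)%N; set b := ((c + 1) ^ N)%N => IH.
nia.
Qed.

Lemma nat_pow_bound (j c : nat) : exists N : nat, (j * c ^ N <= (c + 1) ^ N)%N.
Proof.
case: c => [|c].
  by exists 1%N; rewrite exp0n // muln0.
exists (j * c.+1)%N.
have := bern c.+1 (j * c.+1).
set a := (c.+1 ^ _)%N; set b := ((c.+1 + 1) ^ _)%N => h.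
nia.
Qed.

Section KD.
Variables (A : comPzRingType) (T : set A).
Hypotheses (T_add : forall a b, T a -> T b -> T (a + b))
  (T_mul : forall a b, T a -> T b -> T (a * b))
  (T_sq : forall a, T (a * a))
  (T_bd : forall a, exists n : nat, T (n%:R - a))
  (T_neg1 : ~ T (-1))
  (T_arch : forall g h, (forall k, (0 < k)%N -> T (g *+ k + h)) -> T g).

Lemma T0 : T 0. Proof. by have := T_sq 0; rewrite mulr0. Qed.
Lemma T1 : T 1. Proof. by have := T_sq 1; rewrite mulr1. Qed.
Lemma Tnat n : T n%:R.
Proof. elim: n => [|n IH]; first exact: T0. by rewrite mulrS; apply: (T_add) IH; exact: T1. Qed.
Lemma Tint (m : int) : (0 <= m)%R -> T m%:~R.
Proof. by case: m => // n _; exact: Tnat. Qed.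
Lemma Tmuln a n : T a -> T (a *+ n).
Proof. by move=> Ta; rewrite -mulr_natr; apply: (T_mul) Ta (Tnat n). Qed.
Lemma Texp a n : T a -> T (a ^+ n).
Proof. move=> Ta; elim: n => [|n IH]; first by rewrite expr0; exact: T1. by rewrite exprS; exact: (T_mul). Qed.
Lemma T_lb a : exists n : nat, T (n%:R + a).
Proof. by have [n hn] := T_bd (- a); exists n; rewrite opprK in hn. Qed.

Lemma T_div a n : (0 < n)%N -> T (a *+ n) -> T a.
Proof.
move=> n0 Ta; have [M hM] := T_lb a.
apply: (T_arch (h := (M%:R *+ n))) => k _.
have -> : a *+ k + M%:R *+ n =
   (a *+ n) *+ (k %/ n) + ((M%:R + a) *+ (k %% n) + M%:R *+ (n - k %% n)).
  have hk : (k %% n <= n)%N by rewrite ltnW // ltn_mod.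
  by rewrite {1}(divn_eq k n) mulrnDr mulrnBr //; ring.
apply: (T_add); first exact: Tmuln.
by apply: (T_add); apply: Tmuln => //; exact: Tnat.
Qed.

Lemma lemL z t p : T p -> T t -> z * t = 1 + p -> T z.
Proof.
move=> Tp Tt hzt.
have [m hm] := T_bd (1 + p).
case: m hm => [|c] hm.
  by exfalso; apply: T_neg1; have := T_add hm Tp; rewrite sub0r opprD addrNK.
set w := 1 + p in hzt hm; set y := c.+1%:R - w in hm.
have cy : c%:R - y = p by rewrite /y /w mulrS; ring.
have [K hK] := T_lb z.
have Tzw : T (z * w) by rewrite -hzt mulrA; exact: (T_mul).
have hQ N : exists Q, T Q /\ c.+1%:R ^+ N - y ^+ N = w * Q.
  elim: N => [|N [Q [TQ hQ]]]; first by exists 0; rewrite !expr0 subrr mulr0; split => //; exact: T0.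
  exists (c.+1%:R * Q + y ^+ N); split.
    by apply: (T_add); [apply: (T_mul) => //; exact: Tnat | exact: Texp].
  have -> : c.+1%:R ^+ N.+1 - y ^+ N.+1 = c.+1%:R * (c.+1%:R ^+ N - y ^+ N) + (c.+1%:R - y) * y ^+ N.
    by rewrite !exprS; ring.
  by rewrite hQ /y; ring.
have hC N : T (c%:R ^+ N - y ^+ N).
  elim: N => [|N IH]; first by rewrite !expr0 subrr; exact: T0.
  have -> : c%:R ^+ N.+1 - y ^+ N.+1 = c%:R * (c%:R ^+ N - y ^+ N) + (c%:R - y) * y ^+ N.
    by rewrite !exprS; ring.
  by apply: (T_add); apply: (T_mul) => //; [exact: Tnat | rewrite cy | exact: Texp].
apply: (T_arch (h := 1)) => j j0.
have [N hN] := nat_pow_bound (j * K) c.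
have [Q [TQ hQN]] := hQ N.
have HX : T (c.+1%:R ^+ N * z + K%:R * c%:R ^+ N).
  have -> : c.+1%:R ^+ N * z + K%:R * c%:R ^+ N =
     (z * w) * Q + (K%:R + z) * y ^+ N + K%:R * (c%:R ^+ N - y ^+ N).
    rewrite -mulrA -hQN; ring.
  apply: (T_add); [apply: (T_add)|].
  - exact: (T_mul).
  - by apply: (T_mul) => //; exact: Texp.
  - by apply: (T_mul) => //; exact: Tnat.
apply: (@T_div _ (c.+1 ^ N)); first by rewrite expn_gt0.
have -> : (z *+ j + 1) *+ (c.+1 ^ N) =
   (c.+1%:R ^+ N * z + K%:R * c%:R ^+ N) *+ j + ((c.+1 ^ N) - j * K * c ^ N)%N%:R.
  rewrite natrB; last by rewrite addn1 in hN.
  rewrite -[LHS]mulr_natr !natrM !natrX; ring.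
apply: (T_add); first exact: Tmuln.
exact: Tnat.
Qed.

Definition preord (P : set A) :=
  [/\ T `<=` P, (forall a b, P a -> P b -> P (a + b)),
      (forall a b, P a -> P b -> P (a * b)) & ~ P (-1)].

Lemma exists_total z : ~ T z ->
  exists P, [/\ preord P, P (- z) & forall a, P a \/ P (- a)].
Proof.
move=> Tz.
pose F (X : set A) := preord X /\ X (- z).
pose G (X : set A) := X = set0 \/ F X.
pose S0 := [set y | exists p t, [/\ T p, T t & y = p - z * t]].
have FS0 : F S0.
  split; last by exists 0, 1; split; [exact: T0|exact: T1|ring].
  split.
  - by move=> a Ta; exists a, 0; split => //; [exact: T0|ring].
  - move=> _ _ [p [t [Tp Tt ->]]] [p' [t' [Tp' Tt' ->]]].
    by exists (p + p'), (t + t'); split; [exact: (T_add)|exact: (T_add)|ring].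
  - move=> _ _ [p [t [Tp Tt ->]]] [p' [t' [Tp' Tt' ->]]].
    exists (p * p' + (z * z) * (t * t')), (p * t' + p' * t); split; last by ring.
      by apply: (T_add); apply: (T_mul) => //; exact: (T_mul).
    by apply: (T_add); exact: (T_mul).
  - move=> [p [t [Tp Tt e]]]; apply: Tz; apply: (lemL Tp Tt).
    by rewrite -[1 + p]opprK opprD e; ring.
have chainG : forall Fm : set (set A), Fm `<=` G -> total_on Fm subset ->
    G (\bigcup_(X in Fm) X).
  move=> Fm FmG tot.
  have ne X a : Fm X -> X a -> F X.
    by move=> FX Xa; case: (FmG X FX) => // X0; rewrite X0 in Xa.
  have [[X0 [FX0 nX0]]|nex] := pselect (exists X, Fm X /\ X !=set0); last first.
    left; apply/seteqP; split => // a [X FX Xa]; apply: nex; exists X; split => //; by exists a.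
  have [a0 Xa0] := nX0; have [[TX0 _ _ _] zX0] := ne _ _ FX0 Xa0.
  right; split; last by exists X0.
  split.
  - by move=> a Ta; exists X0 => //; exact: TX0.
  - move=> a b [X1 F1 a1] [X2 F2 b2].
    have [[_ D1 _ _] _] := ne _ _ F1 a1; have [[_ D2 _ _] _] := ne _ _ F2 b2.
    case: (tot _ _ F1 F2) => s.
      by exists X2 => //; apply: (D2) => //; exact: s.
    by exists X1 => //; apply: (D1) => //; exact: s.
  - move=> a b [X1 F1 a1] [X2 F2 b2].
    have [[_ _ D1 _] _] := ne _ _ F1 a1; have [[_ _ D2 _] _] := ne _ _ F2 b2.
    case: (tot _ _ F1 F2) => s.
      by exists X2 => //; apply: (D2) => //; exact: s.
    by exists X1 => //; apply: (D1) => //; exact: s.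
  - by move=> [X FX Xm1]; have [[_ _ _ N] _] := ne _ _ FX Xm1.
have [M [GM maxM]] := Zorn_bigcup chainG.
have FM : F M.
  case: GM => // M0; exfalso; apply: (maxM S0); last by right.
  rewrite M0; split => // h; have [? [? [T0' T1' _]]] : S0 0.
    by exists 0, 0; split; [exact: T0|exact: T0|ring].
  by have := h 0 (ltac:(exists 0, 0; split; [exact: T0|exact: T0|ring])).
have [[TM DM MM NM] zM] := FM.
exists M; split => // a.
have M0 : M 0 by apply: (TM); exact: T0.
have M1 : M 1 by apply: (TM); exact: T1.
have ext b : ~ M b -> exists p q, [/\ M p, M q & -1 = p + b * q].
  move=> nMb.
  pose Mb := [set y | exists p q, [/\ M p, M q & y = p + b * q]].
  have [[p [q [? ? ?]]]|nMb1] := pselect (Mb (-1)); first by exists p, q.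
  exfalso; apply: (maxM Mb); last first.
    right; split; last by exists (- z), 0; split => //; ring.
    split => //.
    - by move=> y Ty; exists y, 0; split => //; [exact: (TM)|ring].
    - move=> _ _ [p [q [Mp Mq ->]]] [p' [q' [Mp' Mq' ->]]].
      by exists (p + p'), (q + q'); split; [exact: (DM)|exact: (DM)|ring].
    - move=> _ _ [p [q [Mp Mq ->]]] [p' [q' [Mp' Mq' ->]]].
      exists (p * p' + (b * b) * (q * q')), (p * q' + p' * q); split; last by ring.
        by apply: (DM); [exact: (MM)|apply: (MM); [apply: (TM); exact: (T_sq)|exact: (MM)]].
      by apply: (DM); exact: (MM).
  split; first by move=> y My; exists y, 0; split => //; ring.
  move=> h; apply: nMb; apply: h; exists 0, 1; split => //; ring.
have [//|nMa] := pselect (M a); first by left.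
have [//|nMna] := pselect (M (- a)); first by right.
exfalso; apply: NM.
have [p1 [q1 [Mp1 Mq1 e1]]] := ext _ nMa.
have [p2 [q2 [Mp2 Mq2 e2]]] := ext _ nMna.
have -> : -1 = p1 + p2 + p1 * p2 + (a * a) * (q1 * q2).
  have -> : (a * a) * (q1 * q2) = (a * q1) * (- (- a * q2)) by ring.
  have -> : a * q1 = -1 - p1 by rewrite e1; ring.
  have -> : - a * q2 = -1 - p2 by rewrite e2; ring.
  ring.
apply: (DM); [apply: (DM); [exact: (DM)|exact: (MM)]|].
by apply: (MM); [apply: (TM); exact: (T_sq)|exact: (MM)].
Qed.

Section StPart.
Variables (RR : realType) (P : set A).
Hypotheses (TP : T `<=` P) (P_add : forall a b, P a -> P b -> P (a + b))
  (P_mul : forall a b, P a -> P b -> P (a * b)) (P_neg1 : ~ P (-1))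
  (P_tot : forall a, P a \/ P (- a)).

Lemma Pint (c : int) : P c%:~R -> (0 <= c)%R.
Proof.
move=> Pc; rewrite leNgt; apply/negP => c0; apply: P_neg1.
have -> : (-1 : A) = c%:~R + (- c - 1)%:~R by rewrite intrB intrN; ring.
by apply: (P_add Pc); apply: TP; apply: Tint; lia.
Qed.

Lemma P_muln x k : P x -> P (x *+ k).
Proof. by move=> Px; rewrite -mulr_natr; apply: (P_mul Px); apply: TP; exact: Tnat. Qed.

Lemma gap a m n m' n' : P (a *+ n - m%:~R) -> P (m'%:~R - a *+ n') ->
  (m * n' <= m' * n)%R.
Proof.
move=> h1 h2; rewrite -subr_ge0; apply: Pint.
have <- : (a *+ n - m%:~R) *+ n' + (m'%:~R - a *+ n') *+ n = (m' * n - m * n')%:~R.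
  by rewrite intrB !intrM; ring.
by apply: P_add; apply: P_muln.
Qed.

Lemma rat_le (m m' : int) (n n' : nat) : (0 < n)%N -> (0 < n')%N ->
  (m * n' <= m' * n)%R -> (m%:~R / n%:R : RR) <= m'%:~R / n'%:R.
Proof.
move=> n0 n'0 h.
have n0' : (0 : RR) < n%:R by rewrite ltr0n.
have n'0' : (0 : RR) < n'%:R by rewrite ltr0n.
rewrite ler_pdivrMr // mulrAC ler_pdivlMr //.
have := h; rewrite -(ler_int RR) !intrM; done.
Qed.

Definition Lset a := [set r : RR | exists m n,
  [/\ (0 < n)%N, P (a *+ n - m%:~R) & r = m%:~R / n%:R]].
Definition psi a := sup (Lset a).

Lemma Lset_ne a : Lset a !=set0.
Proof.
have [M hM] := T_lb a; exists ((- (M%:Z))%:~R / 1%:R), (- (M%:Z)), 1%N; split => //.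
by apply: TP; move: hM; rewrite intrN opprK; rewrite addrC.
Qed.

Lemma Lset_ub a m' n' : (0 < n')%N -> P (m'%:~R - a *+ n') ->
  ubound (Lset a) (m'%:~R / n'%:R).
Proof.
move=> n'0 h _ [m [n [n0 h1 ->]]]; apply: rat_le => //; exact: gap h1 h.
Qed.

Lemma Lset_sup a : has_sup (Lset a).
Proof.
split; first exact: Lset_ne.
have [M hM] := T_bd a; exists ((M%:Z)%:~R / 1%:R); apply: (Lset_ub (n' := 1%N)) => //.
by apply: TP.
Qed.

Lemma psi_lb a m n : (0 < n)%N -> P (a *+ n - m%:~R) -> m%:~R / n%:R <= psi a.
Proof. by move=> n0 h; apply: sup_upper_bound; [exact: Lset_sup|exists m, n]. Qed.

Lemma psi_ub a m n : (0 < n)%N -> P (m%:~R - a *+ n) -> psi a <= m%:~R / n%:R.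
Proof. by move=> n0 h; apply: ge_sup; [exact: Lset_ne|exact: Lset_ub]. Qed.

Lemma psi_ltP a m n : (0 < n)%N -> m%:~R / n%:R < psi a -> P (a *+ n - m%:~R).
Proof.
move=> n0 h; case: (P_tot (a *+ n - m%:~R)) => // h'.
rewrite opprB in h'; have := psi_ub n0 h'.
by rewrite leNgt h.
Qed.

Lemma psi_gtP a m n : (0 < n)%N -> psi a < m%:~R / n%:R -> P (m%:~R - a *+ n).
Proof.
move=> n0 h; case: (P_tot (m%:~R - a *+ n)) => // h'.
rewrite opprB in h'; have := psi_lb n0 h'.
by rewrite leNgt h.
Qed.

Lemma ratN (m : int) (n : nat) : ((- m)%:~R / n%:R : RR) = - (m%:~R / n%:R).
Proof. by rewrite intrN mulNr. Qed.

Lemma psiN a : psi (- a) = - psi a.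
Proof.
apply/eqP; rewrite eq_le; apply/andP; split.
  rewrite leNgt; apply/negP => /rat_between [m [n [n0 /andP[h1 h2]]]].
  have := psi_ltP n0 h2.
  have -> : (- a) *+ n - m%:~R = (- m)%:~R - a *+ n by rewrite intrN; ring.
  move/(psi_ub n0); rewrite ratN => h3.
  lra.
rewrite leNgt; apply/negP => /rat_between [m [n [n0 /andP[h1 h2]]]].
have := psi_gtP n0 h1.
have -> : m%:~R - (- a) *+ n = a *+ n - (- m)%:~R by rewrite intrN; ring.
move/(psi_lb n0); rewrite ratN => h3.
lra.
Qed.

Lemma psiD_ge a b : psi a + psi b <= psi (a + b).
Proof.
rewrite leNgt; apply/negP => h.
have /rat_between [m1 [n1 [n10 /andP[h11 h12]]]] : psi (a + b) - psi b < psi a by lra.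
have /rat_between [m2 [n2 [n20 /andP[h21 h22]]]] :
  psi (a + b) - m1%:~R / n1%:R < psi b by lra.
have P1 := psi_ltP n10 h12; have P2 := psi_ltP n20 h22.
have : P ((a + b) *+ (n1 * n2) - (m1 * n2 + m2 * n1)%:~R).
  have -> : (a + b) *+ (n1 * n2) - (m1 * n2 + m2 * n1)%:~R =
     (a *+ n1 - m1%:~R) *+ n2 + (b *+ n2 - m2%:~R) *+ n1.
    by rewrite intrD !intrM; ring.
  by apply: P_add; apply: P_muln.
have n12 : (0 < n1 * n2)%N by rewrite muln_gt0 n10 n20.
move/(psi_lb n12).
have -> : ((m1 * n2 + m2 * n1)%:~R / (n1 * n2)%:R : RR) = m1%:~R / n1%:R + m2%:~R / n2%:R.
  have n1z : (n1%:R : RR) != 0 by rewrite pnatr_eq0 -lt0n.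
  have n2z : (n2%:R : RR) != 0 by rewrite pnatr_eq0 -lt0n.
  by rewrite intrD !intrM natrM; field; rewrite n1z n2z.
lra.
Qed.

Lemma psiD a b : psi (a + b) = psi a + psi b.
Proof.
apply/eqP; rewrite eq_le psiD_ge andbT.
have := psiD_ge (a + b) (- b); rewrite psiN.
have -> : a + b - b = a by ring.
lra.
Qed.

Lemma psi0 : psi 0 = 0.
Proof. have := psiD 0 0; rewrite addr0; lra. Qed.

Lemma psi1 : psi 1 = 1.
Proof.
apply/eqP; rewrite eq_le; apply/andP; split.
  have := @psi_ub 1 1 1 isT; rewrite divr1; apply; rewrite subrr; apply: TP; exact: T0.
have := @psi_lb 1 1 1 isT; rewrite divr1; apply; rewrite subrr; apply: TP; exact: T0.
Qed.

Lemma psiMn a k : psi (a *+ k) = psi a *+ k.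
Proof. elim: k => [|k IH]; first by rewrite !mulr0n psi0. by rewrite !mulrS psiD IH. Qed.

Lemma psi_nat k : psi k%:R = k%:R.
Proof. by rewrite psiMn psi1. Qed.

Lemma psi_ge0 a : P a -> 0 <= psi a.
Proof.
move=> Pa; have := @psi_lb a 0 1 isT; rewrite mul0r; apply.
by rewrite subr0.
Qed.

Lemma psiM_ge a b : P a -> P b -> psi a * psi b <= psi (a * b).
Proof.
move=> Pa Pb.
have pa0 := psi_ge0 Pa; have pb0 := psi_ge0 Pb; have pab0 := psi_ge0 (P_mul Pa Pb).
rewrite leNgt; apply/negP => h.
have pa : 0 < psi a.
  rewrite lt_neqAle pa0 andbT; apply/eqP => e; move: h; rewrite -e mul0r; lra.
have pb : 0 < psi b.
  rewrite lt_neqAle pb0 andbT; apply/eqP => e; move: h; rewrite -e mulr0; lra.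
have /rat_between [m1 [n1 [n10 /andP[h11 h12]]]] : psi (a * b) / psi b < psi a.
  by rewrite ltr_pdivrMr.
have r1p : 0 < (m1%:~R / n1%:R : RR) by apply: le_lt_trans h11; exact: divr_ge0.
have /rat_between [m2 [n2 [n20 /andP[h21 h22]]]] : psi (a * b) / (m1%:~R / n1%:R) < psi b.
  rewrite ltr_pdivrMr //; rewrite ltr_pdivrMr // in h11; lra.
have r2p : 0 < (m2%:~R / n2%:R : RR) by apply: le_lt_trans h21; exact: divr_ge0 pab0 (ltW r1p).
have m10 : (0 <= m1)%R.
  by move: r1p; rewrite pmulr_lgt0 ?invr_gt0 ?ltr0n // ltr0z => /ltW.
have m20 : (0 <= m2)%R.
  by move: r2p; rewrite pmulr_lgt0 ?invr_gt0 ?ltr0n // ltr0z => /ltW.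
have P1 := psi_ltP n10 h12; have P2 := psi_ltP n20 h22.
have : P ((a * b) *+ (n1 * n2) - (m1 * m2)%:~R).
  have -> : (a * b) *+ (n1 * n2) - (m1 * m2)%:~R =
     (a *+ n1 - m1%:~R) * (b *+ n2 - m2%:~R) + (m1%:~R * (b *+ n2 - m2%:~R)
       + m2%:~R * (a *+ n1 - m1%:~R)).
    by rewrite !intrM; ring.
  by apply: P_add; [exact: P_mul|apply: P_add; apply: P_mul => //; apply: TP; exact: Tint].
have n12 : (0 < n1 * n2)%N by rewrite muln_gt0 n10 n20.
move/(psi_lb n12).
have -> : ((m1 * m2)%:~R / (n1 * n2)%:R : RR) = m1%:~R / n1%:R * (m2%:~R / n2%:R).
  by rewrite intrM natrM invfM; ring.
move: h21; rewrite ltr_pdivrMr // mulrC => h21.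
lra.
Qed.

Lemma psiM_pos a b : P a -> P b -> psi (a * b) = psi a * psi b.
Proof.
move=> Pa Pb; apply/eqP; rewrite eq_le psiM_ge // andbT.
have [N hN] := T_bd a.
have := psiM_ge (TP hN) Pb.
have -> : (N%:R - a) * b = b *+ N - a * b by ring.
rewrite !psiD !psiN psi_nat psiMn => h.
have e : (N%:R - psi a) * psi b = psi b *+ N - psi a * psi b by ring.
rewrite e in h; lra.
Qed.

Lemma psiM a b : psi (a * b) = psi a * psi b.
Proof.
have [Na ha] := T_lb a; have [Nb hb] := T_lb b.
have := psiM_pos (TP ha) (TP hb).
have -> : (Na%:R + a) * (Nb%:R + b) = a * b + (a *+ Nb + (b *+ Na + (Na * Nb)%N%:R)).
  by rewrite natrM; ring.
rewrite !psiD !psiMn ?psi_nat ?psi1 natrM => e.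
have -> : psi (a * b) = (Na%:R + psi a) * (Nb%:R + psi b)
   - (psi a *+ Nb + (psi b *+ Na + Na%:R * Nb%:R)) by rewrite -e; ring.
ring.
Qed.

Lemma psi_props : [/\ forall a b : A, psi (a + b) = psi a + psi b,
     forall a b : A, psi (a * b) = psi a * psi b, psi 1 = 1,
     forall a : A, P a -> 0 <= psi a & forall a : A, P (- a) -> psi a <= 0].
Proof.
split; [exact: psiD|exact: psiM|exact: psi1|exact: psi_ge0|].
move=> a h; have := @psi_ub a 0 1 isT; rewrite mul0r; apply.
by rewrite sub0r mulr1n.
Qed.

End StPart.


Theorem KD_pos (RR : realType) x : ~ T (- x) ->
  exists psi : A -> RR, [/\ forall a b, psi (a + b) = psi a + psi b,
     forall a b, psi (a * b) = psi a * psi b, psi 1 = 1,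
     forall a, T a -> 0 <= psi a & 0 < psi x].
Proof.
move=> Tx.
have [k [k0 nTk]] : exists k, (0 < k)%N /\ ~ T ((- x) *+ k + 1).
  apply/not_existsP => hk; apply: Tx; apply: (T_arch (h := 1)) => k k0.
  case: (pselect (T ((- x) *+ k + 1))) => // nT; exfalso; apply: (hk k); by split.
have [P [[TP DP MP NP] Pz Ptot]] := exists_total nTk.
have [hD hM h1 hpos hneg] := psi_props RR TP DP MP NP Ptot.
exists (psi RR P); split => //.
- by move=> a Ta; apply: hpos; exact: TP.
have hN a : psi RR P (- a) = - psi RR P a.
  by have := hD a (- a); rewrite subrr; have := hD 0 0; rewrite addr0; lra.
have hMn a n : psi RR P (a *+ n) = psi RR P a *+ n.
  by elim: n => [|n IH]; [have := hD 0 0; rewrite addr0 !mulr0n; lra|rewrite !mulrS hD IH].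
have := hneg _ Pz; rewrite hD hMn hN h1 => h.
have : 1 <= psi RR P x *+ k by lra.
rewrite -mulr_natr; apply: contraTlt => h0.
have : psi RR P x * k%:R <= 0 by rewrite mulr_le0_ge0 // ler0n.
lra.
Qed.
End KD.

Section Conc.
Variables (R : comPzRingType) (le : R -> R -> Prop) (Hpo : po_comring le).

Lemma le_sub0 x y : le x y <-> le 0 (y - x).
Proof.
split => h.
  by have := @po_add _ _ Hpo x y (- x) h; rewrite subrr.
by have := @po_add _ _ Hpo 0 (y - x) x h; rewrite add0r subrK.
Qed.

Lemma pos_add a b : le 0 a -> le 0 b -> le 0 (a + b).
Proof.
move=> ha hb; apply: (po_trans Hpo hb).
by have := @po_add _ _ Hpo 0 a b ha; rewrite add0r.
Qed.
Lemma pos_mul a b : le 0 a -> le 0 b -> le 0 (a * b). Proof. exact: po_mul. Qed.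
Lemma pos_sq a : le 0 (a * a). Proof. exact: po_sq. Qed.
Lemma pos1 : le 0 1. Proof. by have := pos_sq 1; rewrite mulr1. Qed.
Lemma pos_nat n : le 0 n%:R.
Proof. elim: n => [|n IH]; first exact: po_refl. by rewrite mulrS; apply: pos_add IH; exact: pos1. Qed.
Lemma pos_antisym a : le 0 a -> le 0 (- a) -> a = 0.
Proof.
move=> h1 h2; apply: (po_antisym Hpo) => //.
by apply/le_sub0; rewrite sub0r.
Qed.

Lemma Loc_pos s : Loc le s -> le 0 s.
Proof. by move=> [h _]; have := pos_add h pos1; rewrite subrK. Qed.
Lemma Loc1 : Loc le 1.
Proof. by split; [rewrite subrr; exact: po_refl|move=> r; rewrite mulr1]. Qed.
Lemma Loc_mul s t : Loc le s -> Loc le t -> Loc le (s * t).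
Proof.
move=> [h1 h2] [h3 h4]; split.
  have -> : s * t - 1 = (s - 1) * (t - 1) + ((s - 1) + (t - 1)) by ring.
  by apply: pos_add; [exact: pos_mul|exact: pos_add].
by move=> r; rewrite mulrA => /h4 /h2.
Qed.
Lemma Loc_cancel s r : Loc le s -> r * s = 0 -> r = 0.
Proof.
move=> [_ h] e; apply: pos_antisym; apply: h.
  by rewrite e; exact: po_refl.
by rewrite mulNr e oppr0; exact: po_refl.
Qed.

Lemma bdP a : is_bd le a <->
  Loc le a.2 /\ exists n : nat, le 0 (n%:R * a.2 + a.1) /\ le 0 (n%:R * a.2 - a.1).
Proof.
rewrite /is_bd /frac_le /=; split => -[hL [n [h1 h2]]]; split => //; exists n.
  move/le_sub0: h1; move/le_sub0: h2.
  have -> : a.1 * 1 - - n%:R * a.2 = n%:R * a.2 + a.1 by ring.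
  by have -> : n%:R * a.2 - a.1 * 1 = n%:R * a.2 - a.1 by ring.
split; apply/le_sub0.
  by have -> : a.1 * 1 - - n%:R * a.2 = n%:R * a.2 + a.1 by ring.
by have -> : n%:R * a.2 - a.1 * 1 = n%:R * a.2 - a.1 by ring.
Qed.

Local Notation BF := (bdfrac le).

Lemma bd_frac_add a b : is_bd le a -> is_bd le b -> is_bd le (frac_add a b).
Proof.
move=> /bdP [La [n [h1 h2]]] /bdP [Lb [m [h3 h4]]]; apply/bdP; split => /=.
  exact: Loc_mul.
have pa := Loc_pos La; have pb := Loc_pos Lb.
exists (n + m)%N; rewrite natrD; split.
  have -> : (n%:R + m%:R) * (a.2 * b.2) + (a.1 * b.2 + b.1 * a.2) =
    (n%:R * a.2 + a.1) * b.2 + (m%:R * b.2 + b.1) * a.2 by ring.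
  by apply: pos_add; exact: pos_mul.
have -> : (n%:R + m%:R) * (a.2 * b.2) - (a.1 * b.2 + b.1 * a.2) =
  (n%:R * a.2 - a.1) * b.2 + (m%:R * b.2 - b.1) * a.2 by ring.
by apply: pos_add; exact: pos_mul.
Qed.

Lemma bd_frac_mul a b : is_bd le a -> is_bd le b -> is_bd le (frac_mul a b).
Proof.
move=> /bdP [La [n [h1 h2]]] /bdP [Lb [m [h3 h4]]]; apply/bdP; split => /=.
  exact: Loc_mul.
have pa := Loc_pos La; have pb := Loc_pos Lb.
have pna : le 0 (n%:R * a.2) by apply: pos_mul => //; exact: pos_nat.
have pmb : le 0 (m%:R * b.2) by apply: pos_mul => //; exact: pos_nat.
exists (3 * (n * m))%N; rewrite !natrM; split.
  have -> : 3%:R * (n%:R * m%:R) * (a.2 * b.2) + a.1 * b.1 =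
    (n%:R * a.2 + a.1) * (m%:R * b.2 + b.1) + (n%:R * a.2 - a.1) * (m%:R * b.2)
     + (n%:R * a.2) * (m%:R * b.2 - b.1) by ring.
  by apply: pos_add; [apply: pos_add|]; exact: pos_mul.
have -> : 3%:R * (n%:R * m%:R) * (a.2 * b.2) - a.1 * b.1 =
  (n%:R * a.2 + a.1) * (m%:R * b.2 - b.1) + (n%:R * a.2 - a.1) * (m%:R * b.2)
   + (n%:R * a.2) * (m%:R * b.2 + b.1) by ring.
by apply: pos_add; [apply: pos_add|]; exact: pos_mul.
Qed.

Lemma bd_opp a : is_bd le a -> is_bd le (- a.1, a.2).
Proof.
move=> /bdP [La [n [h1 h2]]]; apply/bdP; split => //=; exists n.
by rewrite opprK; split.
Qed.

Lemma bd_nat n : is_bd le (n%:R, 1).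
Proof.
apply/bdP; split => //=; first exact: Loc1.
exists n; rewrite mulr1 subrr; split; last exact: po_refl.
by rewrite -natrD; apply: pos_nat.
Qed.

Definition bdadd (a b : BF) : BF := exist _ _ (bd_frac_add (svalP a) (svalP b)).
Definition bdmul (a b : BF) : BF := exist _ _ (bd_frac_mul (svalP a) (svalP b)).
Definition bdopp (a : BF) : BF := exist _ _ (bd_opp (svalP a)).
Definition bdnat n : BF := exist _ _ (bd_nat n).

HB.instance Definition _ := gen_eqMixin BF.
HB.instance Definition _ := gen_choiceMixin BF.

Definition fe (a b : BF) : bool := `[< frac_eq (sval a) (sval b) >].

Lemma feP a b : reflect (frac_eq (sval a) (sval b)) (fe a b).
Proof. exact: asboolP. Qed.

Lemma fe_refl : reflexive fe.
Proof. by move=> a; apply/feP. Qed.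
Lemma fe_sym : symmetric fe.
Proof. by move=> a b; apply/feP/feP; rewrite /frac_eq => ->. Qed.
Lemma fe_trans : transitive fe.
Proof.
move=> b a c /feP h1 /feP h2; apply/feP; move: h1 h2; rewrite /frac_eq => h1 h2.
have Lb : Loc le (sval b).2 by case: (svalP b).
apply/eqP; rewrite -subr_eq0; apply/eqP; apply: (Loc_cancel Lb).
have -> : ((sval a).1 * (sval c).2 - (sval c).1 * (sval a).2) * (sval b).2 =
  ((sval a).1 * (sval b).2) * (sval c).2 - ((sval c).1 * (sval b).2) * (sval a).2 by ring.
rewrite h1 -h2; ring.
Qed.

Canonical fe_equiv := EquivRel fe fe_refl fe_sym fe_trans.

Definition Aq := {eq_quot fe}.
HB.instance Definition _ : EqQuotient _ fe Aq := EqQuotient.on Aq.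
HB.instance Definition _ := Choice.on Aq.

Lemma fe_pi a b : (\pi_Aq a = \pi_Aq b) <-> frac_eq (sval a) (sval b).
Proof. by split => [/eqmodP/feP|/feP/eqmodP]. Qed.

Lemma fe_repr a : frac_eq (sval a) (sval (repr (\pi_Aq a))).
Proof. by apply/fe_pi; rewrite reprK. Qed.

Lemma bdadd_fe a a' b b' : frac_eq (sval a) (sval a') -> frac_eq (sval b) (sval b') ->
  frac_eq (sval (bdadd a b)) (sval (bdadd a' b')).
Proof.
rewrite /frac_eq /= => h1 h2.
apply/eqP; rewrite -subr_eq0; apply/eqP.
have -> : ((sval a).1 * (sval b).2 + (sval b).1 * (sval a).2) * ((sval a').2 * (sval b').2) -
  ((sval a').1 * (sval b').2 + (sval b').1 * (sval a').2) * ((sval a).2 * (sval b).2) =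
  ((sval a).1 * (sval a').2 - (sval a').1 * (sval a).2) * ((sval b).2 * (sval b').2)
  + ((sval b).1 * (sval b').2 - (sval b').1 * (sval b).2) * ((sval a).2 * (sval a').2) by ring.
by rewrite h1 h2 !subrr !mul0r addr0.
Qed.

Lemma bdmul_fe a a' b b' : frac_eq (sval a) (sval a') -> frac_eq (sval b) (sval b') ->
  frac_eq (sval (bdmul a b)) (sval (bdmul a' b')).
Proof.
rewrite /frac_eq /= => h1 h2.
apply/eqP; rewrite -subr_eq0; apply/eqP.
have -> : (sval a).1 * (sval b).1 * ((sval a').2 * (sval b').2) -
  (sval a').1 * (sval b').1 * ((sval a).2 * (sval b).2) =
  ((sval a).1 * (sval a').2 - (sval a').1 * (sval a).2) * ((sval b).1 * (sval b').2)
  + ((sval b).1 * (sval b').2 - (sval b').1 * (sval b).2) * ((sval a').1 * (sval a).2) by ring.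
by rewrite h1 h2 !subrr !mul0r addr0.
Qed.

Lemma bdopp_fe a a' : frac_eq (sval a) (sval a') -> frac_eq (sval (bdopp a)) (sval (bdopp a')).
Proof. by rewrite /frac_eq /= !mulNr => ->. Qed.

Definition addA := lift_op2 Aq bdadd.
Lemma pi_add : {morph \pi : x y / bdadd x y >-> addA x y}.
Proof.
move=> x y; unlock addA; apply/fe_pi; apply: bdadd_fe; exact: fe_repr.
Qed.
Canonical pi_add_morph := PiMorph2 pi_add.

Definition mulA := lift_op2 Aq bdmul.
Lemma pi_mul : {morph \pi : x y / bdmul x y >-> mulA x y}.
Proof.
move=> x y; unlock mulA; apply/fe_pi; apply: bdmul_fe; exact: fe_repr.
Qed.
Canonical pi_mul_morph := PiMorph2 pi_mul.

Definition oppA := lift_op1 Aq bdopp.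
Lemma pi_opp : {morph \pi : x / bdopp x >-> oppA x}.
Proof.
move=> x; unlock oppA; apply/fe_pi; apply: bdopp_fe; exact: fe_repr.
Qed.
Canonical pi_opp_morph := PiMorph1 pi_opp.

Definition zeroA := \pi_Aq (bdnat 0).
Definition oneA := \pi_Aq (bdnat 1).

Lemma addAA : associative addA.
Proof.
elim/quotW=> x; elim/quotW=> y; elim/quotW=> z; rewrite !piE.
by apply/fe_pi; rewrite /frac_eq /=; ring.
Qed.
Lemma addAC : commutative addA.
Proof.
elim/quotW=> x; elim/quotW=> y; rewrite !piE.
by apply/fe_pi; rewrite /frac_eq /=; ring.
Qed.
Lemma add0A : left_id zeroA addA.
Proof.
elim/quotW=> x; rewrite /zeroA !piE.
by apply/fe_pi; rewrite /frac_eq /=; ring.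
Qed.
Lemma addNA : left_inverse zeroA oppA addA.
Proof.
elim/quotW=> x; rewrite /zeroA !piE.
by apply/fe_pi; rewrite /frac_eq /=; ring.
Qed.

HB.instance Definition _ := GRing.isZmodule.Build Aq addAA addAC add0A addNA.

Lemma mulAA : associative mulA.
Proof.
elim/quotW=> x; elim/quotW=> y; elim/quotW=> z; rewrite !piE.
by apply/fe_pi; rewrite /frac_eq /=; ring.
Qed.
Lemma mulAC : commutative mulA.
Proof.
elim/quotW=> x; elim/quotW=> y; rewrite !piE.
by apply/fe_pi; rewrite /frac_eq /=; ring.
Qed.
Lemma mul1A : left_id oneA mulA.
Proof.
elim/quotW=> x; rewrite /oneA !piE.
by apply/fe_pi; rewrite /frac_eq /=; ring.
Qed.
Lemma mulDA : left_distributive mulA addA.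
Proof.
elim/quotW=> x; elim/quotW=> y; elim/quotW=> z; rewrite !piE.
by apply/fe_pi; rewrite /frac_eq /=; ring.
Qed.

HB.instance Definition _ := GRing.Zmodule_isComPzRing.Build Aq mulAA mulAC mul1A mulDA.

Lemma piD a b : \pi_Aq a + \pi_Aq b = \pi_Aq (bdadd a b).
Proof. exact: (esym (pi_add a b)). Qed.
Lemma piM a b : \pi_Aq a * \pi_Aq b = \pi_Aq (bdmul a b).
Proof. exact: (esym (pi_mul a b)). Qed.
Lemma piN a : - \pi_Aq a = \pi_Aq (bdopp a).
Proof. exact: (esym (pi_opp a)). Qed.
Lemma pi1 : 1 = \pi_Aq (bdnat 1). Proof. by []. Qed.
Lemma pi_nat n : n%:R = \pi_Aq (bdnat n).
Proof.
elim: n => [|n IH]; first by [].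
rewrite mulrS IH pi1 piD; apply/fe_pi; rewrite /frac_eq /= mulrS; ring.
Qed.

Definition posA (x : Aq) : Prop := le 0 (sval (repr x)).1.

Lemma posA_pi a : posA (\pi_Aq a) <-> le 0 (sval a).1.
Proof.
have h := fe_repr a; move: h; rewrite /posA /frac_eq.
set r := sval (repr _) => h.
have La : Loc le (sval a).2 by case: (svalP a).
have Lr : Loc le r.2 by rewrite /r; case: (svalP (repr (\pi_Aq a))).
split => hp.
  by apply: Lr.2; rewrite h; apply: pos_mul => //; exact: Loc_pos.
by apply: La.2; rewrite -h; apply: pos_mul => //; exact: Loc_pos.
Qed.

Lemma Lden (a : BF) : Loc le (sval a).2. Proof. by case: (svalP a). Qed.

Lemma TA_add x y : posA x -> posA y -> posA (x + y).
Proof.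
elim/quotW: x => a; elim/quotW: y => b; rewrite piD !posA_pi /= => ha hb.
by apply: pos_add; apply: pos_mul => //; apply: Loc_pos; exact: Lden.
Qed.
Lemma TA_mul x y : posA x -> posA y -> posA (x * y).
Proof.
elim/quotW: x => a; elim/quotW: y => b; rewrite piM !posA_pi /= => ha hb.
exact: pos_mul.
Qed.
Lemma TA_sq x : posA (x * x).
Proof. elim/quotW: x => a; rewrite piM posA_pi /=; exact: pos_sq. Qed.
Lemma TA_bd x : exists n : nat, posA (n%:R - x).
Proof.
elim/quotW: x => a; have /bdP [_ [n [_ h]]] := svalP a.
exists n; rewrite pi_nat piN piD posA_pi /=.
by have -> : n%:R * (sval a).2 + - (sval a).1 * 1 = n%:R * (sval a).2 - (sval a).1 by ring.
Qed.
Lemma TA_neg1 : (1 : R) <> 0 -> ~ posA (-1).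
Proof.
move=> h10; rewrite pi1 piN posA_pi /= => h; apply: h10.
by apply: pos_antisym => //; exact: pos1.
Qed.

Section Arch.
Hypothesis Harch : archimedean le.
Lemma TA_arch g h : (forall k, (0 < k)%N -> posA (g *+ k + h)) -> posA g.
Proof.
elim/quotW: g => a; elim/quotW: h => b hk; rewrite posA_pi.
have Lb := Lden b; apply: Lb.2.
apply: (Harch (h := (sval b).1 * (sval a).2)) => k k0.
have := hk k k0; rewrite -mulr_natr pi_nat piM piD posA_pi /=.
by have -> : (sval a).1 * k%:R * (sval b).2 + (sval b).1 * ((sval a).2 * 1) =
  (sval a).1 * (sval b).2 *+ k + (sval b).1 * (sval a).2 by ring.
Qed.
End Arch.

Section AddHom.
Variables (A : comPzRingType) (RR : realType) (f : A -> RR).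
Hypotheses (fD : forall x y, f (x + y) = f x + f y) (f1 : f 1 = 1).
Lemma f0 : f 0 = 0. Proof. by have := fD 0 0; rewrite addr0; lra. Qed.
Lemma fN x : f (- x) = - f x. Proof. by have := fD x (- x); rewrite subrr f0; lra. Qed.
Lemma fB x y : f (x - y) = f x - f y. Proof. by rewrite fD fN. Qed.
Lemma fMn x k : f (x *+ k) = f x *+ k.
Proof. by elim: k => [|k IH]; [rewrite !mulr0n f0|rewrite !mulrS fD IH]. Qed.
Lemma fnat k : f k%:R = k%:R. Proof. by rewrite fMn f1. Qed.
Lemma fint (m : int) : f m%:~R = m%:~R.
Proof. by case: m => k; [exact: fnat|rewrite NegzE !intrN fN; congr (- _); exact: fnat]. Qed.
Lemma fsum n (F : 'I_n -> A) : f (\sum_(i < n) F i) = \sum_(i < n) f (F i).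
Proof. by elim/big_ind2: _ => //; [exact: f0|move=> ? ? ? ? <- <-; exact: fD]. Qed.
End AddHom.

Lemma open_ball (RR : realType) (V : set RR) x : open V -> V x ->
  exists e : RR, 0 < e /\ forall y, `|x - y| < e -> V y.
Proof.
move=> oV Vx.
have : nbhs x V by apply: open_nbhs_nbhs; split.
by move=> /nbhs_ballP [e e0 he]; exists e; split => // y hy; apply: he.
Qed.

Section Phi.
Variables (RR : realType) (phi : BF -> RR) (Hphi : character phi).

Definition phiA (x : Aq) := phi (repr x).

Lemma phiA_pi a : phiA (\pi_Aq a) = phi a.
Proof.
case: Hphi => he _ _ _ _; apply: he; have := fe_repr a; rewrite /frac_eq => ->; ring.
Qed.
Lemma phiA_D x y : phiA (x + y) = phiA x + phiA y.
Proof.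
elim/quotW: x => a; elim/quotW: y => b; rewrite piD !phiA_pi.
case: Hphi => _ hD _ _ _; apply: hD; rewrite /frac_eq; ring.
Qed.
Lemma phiA_M x y : phiA (x * y) = phiA x * phiA y.
Proof.
elim/quotW: x => a; elim/quotW: y => b; rewrite piM !phiA_pi.
case: Hphi => _ _ hM _ _; apply: hM; rewrite /frac_eq; ring.
Qed.
Lemma phiA_1 : phiA 1 = 1.
Proof.
rewrite pi1 phiA_pi; case: Hphi => _ _ _ h1 _; apply: h1; rewrite /frac_eq /=; ring.
Qed.
Lemma phiA_pos x : posA x -> 0 <= phiA x.
Proof.
elim/quotW: x => a; rewrite posA_pi phiA_pi => h.
case: Hphi => _ _ _ _ hp; apply: hp; rewrite /frac_le /= mul0r mulr1; exact: h.
Qed.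

End Phi.

Lemma bd_q q : Loc le q -> is_bd le (1, q).
Proof.
move=> Lq; apply/bdP; split => //=; exists 1%N; rewrite mul1r; split.
  by apply: pos_add; [exact: Loc_pos|exact: pos1].
by case: Lq.
Qed.

Lemma posA_mulq q (Lq : Loc le q) y :
  posA (\pi_Aq (exist _ _ (bd_q Lq)) * y) -> posA y.
Proof. by elim/quotW: y => c; rewrite piM !posA_pi /= mul1r. Qed.

Lemma main_dense (Harch : archimedean le) (h10 : (1 : R) <> 0) q (Lq : Loc le q)
  (RR : realType) (phi : BF -> RR) (Hphi : character phi)
  n (a : 'I_n -> BF) (V : 'I_n -> set RR) :
  (forall i, open (V i)) -> (forall i, V i (phi (a i))) ->
  exists psi, @O_q_lt_infty R le RR q psi /\ forall i, V i (psi (a i)).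
Proof.
move=> oV Va.
have [e he] := choice (fun i => open_ball (oV i) (Va i)).
pose N := (\max_(i < n) Num.bound ((n.+2)%:R / e i)).+1.
have N0 : (0 : RR) < N%:R by rewrite ltr0n.
have hN i : (n.+2)%:R < e i * N%:R.
  have [e0 _] := he i.
  rewrite -ltr_pdivrMl // mulrC.
  have hb := @archi_boundP _ ((n.+2)%:R / e i) (ltac:(by rewrite divr_ge0 // ltW)).
  apply: lt_le_trans hb _.
  rewrite ler_nat /N; apply: ltnW; rewrite ltnS.
  exact: (@leq_bigmax _ (fun i => Num.bound ((n.+2)%:R / e i)) i).
pose m i := Num.floor (N%:R * phi (a i)).
pose g : Aq := \sum_(i < n) (\pi_Aq (a i) *+ N - (m i)%:~R) ^+ 2.
pose b : Aq := \pi_Aq (exist _ _ (bd_q Lq)).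
pose x : Aq := b * ((n.+1)%:R - g).
have hs i : 0 <= N%:R * phi (a i) - (m i)%:~R < 1.
  have := floor_le (N%:R * phi (a i)); have := floorD1_gt (N%:R * phi (a i)).
  rewrite intrD /m; lra.
have nx : ~ posA (- x).
  move=> hx.
  have : posA (g - (n.+1)%:R).
    apply: (posA_mulq (Lq := Lq)); rewrite -/b.
    by have <- : - x = b * (g - (n.+1)%:R) by rewrite /x; ring.
  move/(phiA_pos Hphi).
  have fD := phiA_D Hphi; have f1 := phiA_1 Hphi.
  rewrite (fB fD) (fnat fD f1) /g (fsum fD).
  have : \sum_(i < n) phiA phi ((\pi_Aq (a i) *+ N - (m i)%:~R) ^+ 2) <= \sum_(i < n) (1 : RR).
    apply: ler_sum => i _.
    rewrite expr2 (phiA_M Hphi) (fB fD) (fMn fD) (fint fD f1) (phiA_pi Hphi) -mulr_natl.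
    have := hs i; set t := _ - _ => /andP [t0 t1].
    have : t * t <= t * 1 by apply: ler_wpM2l => //; exact: ltW.
    lra.
  rewrite sumr_const card_ord => h1; rewrite subr_ge0 => h2.
  by have := le_trans h2 h1; rewrite ler_nat ltnn.
have [psi [psiD psiM psi1 psi_pos psix]] :=
  KD_pos (@TA_add) (@TA_mul) TA_sq TA_bd (TA_neg1 h10) (TA_arch Harch) RR nx.
pose psi' (c : BF) := psi (\pi_Aq c).
have pb : 0 <= psi b by apply: psi_pos; rewrite posA_pi /=; exact: pos1.
have ex : psi x = psi b * ((n.+1)%:R - psi g).
  by rewrite /x psiM (fB psiD) (fnat psiD psi1).
have pb0 : 0 < psi b.
  rewrite lt_neqAle pb andbT; apply/eqP => eb; move: psix; rewrite ex -eb mul0r; lra.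
have pg : psi g < (n.+1)%:R.
  move: psix; rewrite ex; rewrite pmulr_rgt0 //; lra.
exists psi'; split.
  split; last first.
    exists (exist _ _ (bd_q Lq)); split => //; rewrite /frac_eq; ring.
  split.
  - by move=> c d /(proj2 (fe_pi _ _)) h; rewrite /psi' h.
  - move=> c d c' /(proj2 (fe_pi c' (bdadd c d))) h; rewrite /psi'.
    by have -> : \pi_Aq c' = \pi_Aq c + \pi_Aq d by rewrite piD h.
  - move=> c d c' /(proj2 (fe_pi c' (bdmul c d))) h; rewrite /psi'.
    by have -> : \pi_Aq c' = \pi_Aq c * \pi_Aq d by rewrite piM h.
  - move=> c hc; rewrite /psi'.
    have -> : \pi_Aq c = 1 by rewrite pi1; apply/fe_pi; move: hc; rewrite /frac_eq /=.
    exact: psi1.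
  - move=> c hc; apply: psi_pos; apply/posA_pi; move: hc; rewrite /frac_le /= mul0r mulr1.
    done.
move=> i; have [e0 hV] := he i; apply: hV.
rewrite /psi'.
set t := N%:R * psi (\pi_Aq (a i)) - (m i)%:~R.
have ht : t ^+ 2 <= psi g.
  rewrite /g (fsum psiD) (bigD1 i) //=.
  rewrite expr2 psiM (fB psiD) (fMn psiD) (fint psiD psi1) -expr2 -mulr_natl -/t.
  rewrite lerDl; apply: sumr_ge0 => j _.
  by rewrite expr2 psiM -expr2 sqr_ge0.
have hta : `|t| < (n.+1)%:R.
  rewrite ltNge; apply/negP => h.
  have h1 : (1 : RR) <= (n.+1)%:R by rewrite ler1n.
  have e2 : `|t| * `|t| = t ^+ 2.
    by rewrite -normrM ger0_norm -?expr2 ?sqr_ge0.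
  have : (n.+1)%:R * (n.+1)%:R <= t ^+ 2.
    by rewrite -e2 ler_pM // (le_trans ler01 h1).
  have : (n.+1)%:R <= (n.+1)%:R * (n.+1)%:R :> RR by rewrite ler_peMl // ler01.
  lra.
have := hs i; set s := N%:R * phi (a i) - (m i)%:~R => /andP [s0 s1].
have hd : phi (a i) - psi (\pi_Aq (a i)) = (s - t) / N%:R.
  by rewrite /s /t; field; rewrite gt_eqF.
rewrite hd normrM normfV [`|N%:R|]ger0_norm ?ler0n // ltr_pdivrMr //.
apply: le_lt_trans (ler_normB _ _) _.
rewrite ger0_norm //.
have := hN i; rewrite -[n.+2]addn1 natrD => h.
lra.
Qed.

End Conc.

Theorem proposition29 (RR : realType) (R : comPzRingType) (le : R -> R -> Prop)
  (Hpo : po_comring le) (Harch : archimedean le) (Hloc : localizable le)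
  (q : R) (Hq : Loc le q) :
  @dense_in_K R le RR (@O_q_lt_infty R le RR q).
Proof.
move=> phi Kphi n a V oV Va.
case: (pselect ((1 : R) = 0)) => h10; last first.
  exact: (main_dense Hpo Harch h10 Hq Kphi oV Va).
exfalso.
have triv (x y : R) : x = y.
  by rewrite -[x]mulr1 -[y]mulr1 h10 !mulr0.
case: Kphi => _ hD _ h1 _.
pose c := bdnat Hpo 1.
have e1 : phi c = 1 by apply: h1; exact: triv.
have := hD c c c (triv _ _); rewrite e1 => h.
have : (1 : RR) = 2 by rewrite [in LHS]h.
lra.
Qed.
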